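(* Let $0\le\underline{s}<\overline{s}\le1$. The set of locally zero signals $$F_{zero}=\{f\in F^\infty_{(\underline{s},\overline{s})}: \exists\,\underline{s}<z_1<z_2<\overline{s}\text{ such that } f(s)=0\text{ for a.e. } s\in[z_1,z_2]\}$$ is of first category in $F^\infty_{(\underline{s},\overline{s})}$ (with respect to the topology induced by the $L_\infty$-norm).
   Context: $F^\infty_{(\underline{s},\overline{s})}=\{f\in L_\infty(\underline{s},\overline{s})\cap C^0(\underline{s},\overline{s}): \int_{\underline{s}}^{\overline{s}} f(s)\frac{1-2s}{s}ds=0,\ \int_{\underline{s}}^{\overline{s}} f=1,\ f\ge0,\ f(s)\frac{1-s}{s}\in L_\infty(\underline{s},\overline{s})\}$. *)

(* Defs.v *)
From HB Require Import structures.
From mathcomp Require Import all_boot all_order all_algebra.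
From mathcomp Require Import all_classical all_reals all_analysis.
Set Implicit Arguments. Unset Strict Implicit. Unset Printing Implicit Defensive.
Import Order.TTheory GRing.Theory Num.Theory.
Import numFieldNormedType.Exports.
Local Open Scope classical_set_scope.
Local Open Scope ring_scope.

Definition Linf_dist (R : realType) (a b : R) (f g : R -> R) : \bar R :=
  ereal_sup [set (`|f x - g x|)%:E | x in `]a, b[].

Definition Finf (R : realType) (a b : R) : set (R -> R) :=
  [set f : R -> R | {within `]a, b[, continuous f}
    /\ (exists M : R, forall s, s \in `]a, b[ -> `|f s| <= M)
    /\ (\int[lebesgue_measure]_(s in `]a, b[) ((f s : R) * (1 - 2 * s) / s)%:E = 0%:E)%E
    /\ (\int[lebesgue_measure]_(s in `]a, b[) ((f s : R))%:E = 1%:E)%E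
    /\ (forall s, s \in `]a, b[ -> 0 <= f s)
    /\ (exists M : R, forall s, s \in `]a, b[ -> `|f s * (1 - s) / s| <= M)].

Definition Fzero (R : realType) (a b : R) : set (R -> R) :=
  [set f : R -> R | Finf a b f /\ exists z1 z2 : R, a < z1 /\ z1 < z2 /\ z2 < b /\
     {ae lebesgue_measure, forall s, s \in `[z1, z2] -> f s = 0}].

Definition rel_open (R : realType) (a b : R) (X U : set (R -> R)) : Prop :=
  U `<=` X /\ forall f, U f -> exists e : R, 0 < e /\
    forall h, X h -> (Linf_dist a b f h < e%:E)%E -> U h.

(* A is nowhere dense in X: every nonempty open subset of X contains a
   nonempty open subset of X disjoint from A (closure of A has empty interior). *)
Definition nowhere_dense_in (R : realType) (a b : R) (X A : set (R -> R)) : Prop :=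
  forall U, rel_open a b X U -> U !=set0 ->
    exists V, rel_open a b X V /\ V !=set0 /\ V `<=` U /\ V `&` A = set0.

Definition first_category_in (R : realType) (a b : R) (X A : set (R -> R)) : Prop :=
  exists An : nat -> set (R -> R),
    (forall n, nowhere_dense_in a b X (An n)) /\ A `<=` \bigcup_n An n.

(* Main.v *)
Require Import Defs.
From HB Require Import structures.
From mathcomp Require Import all_boot all_order all_algebra.
From mathcomp Require Import all_classical all_reals all_analysis.
From mathcomp Require Import ring lra.
Import Order.TTheory GRing.Theory Num.Theory.
Import numFieldNormedType.Exports.
Local Open Scope classical_set_scope.
Local Open Scope ring_scope.

Section S.
Variable R : realType.


Lemma ctsC (A : set R) (c : R) : {within A, continuous (fun _ : R => c)}.
Proof. apply: continuous_subspaceT; exact: cst_continuous. Qed.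
Lemma ctsid (A : set R) : {within A, continuous (fun s : R => s)}.
Proof. apply: continuous_subspaceT => x; exact: cvg_id. Qed.
Lemma ctsnorm (A : set R) (f : R -> R) : {within A, continuous f} ->
  {within A, continuous (fun s => `|f s|)}.
Proof. move=> hf x. apply: continuous_comp; [exact: hf | exact: norm_continuous]. Qed.
Lemma ctsinv (a b : R) : 0 <= a -> {within `]a, b[, continuous (fun s : R => s^-1)}.
Proof.
move=> a0; apply: continuous_subspace_itv => x; rewrite in_itv /= => /andP[ax _].
apply: inv_continuous; rewrite gt_eqF //; exact: le_lt_trans ax.
Qed.

Lemma arch (z : R) : 0 < z -> exists n : nat, n.+1%:R^-1 <= z.
Proof.
move=> z0; have := near_infty_natSinv_lt (PosNum z0).
case => N _ HN; exists N; apply: ltW; exact: (HN N (leqnn N)).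
Qed.

Section T.


Variables a b : R.
Hypothesis a0 : 0 <= a.
Hypothesis ab : a < b.
Local Notation mu := (@lebesgue_measure R).
Local Notation I := (`]a, b[%classic : set R).

Lemma muI : (mu I < +oo)%E.
Proof. by rewrite lebesgue_measure_itv /= lte_fin ab -EFinD ltry. Qed.

Lemma intg (h : R -> R) : {within I, continuous h} ->
  (exists M, forall s, s \in `]a, b[ -> `|h s| <= M) ->
  mu.-integrable I (EFin \o h).
Proof.
move=> hc [M hM]; apply: measurable_bounded_integrable.
- exact: measurable_itv.
- exact: muI.
- exact: measurable_realfun.subspace_continuous_measurable_fun (measurable_itv _) hc.
- exists M; split; first exact: num_real.
  move=> y My x Ax; apply: le_trans (hM x Ax) (ltW My).
Qed.

Lemma RintE (h : R -> R) : mu.-integrable I (EFin \o h) ->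
  (\int[mu]_(s in I) (h s)%:E)%E = (\int[mu]_(s in I) h s)%:E.
Proof. move=> ih; rewrite /Rintegral fineK //. apply: (integrable_fin_num _ ih). exact: measurable_itv. Qed.

Lemma Rint_pos (h : R -> R) (c d del : R) : a <= c -> c < d -> d <= b -> 0 < del ->
  {within I, continuous h} -> (exists M, forall s, s \in `]a, b[ -> `|h s| <= M) ->
  (forall s, s \in `]a,b[ -> 0 <= h s) ->
  (forall s, c < s < d -> del <= h s) -> 0 < \int[mu]_(s in I) h s.
Proof.
move=> ac cd db d0 hc hM h0 hd.
have mh : measurable_fun I h :=
  measurable_realfun.subspace_continuous_measurable_fun (measurable_itv _) hc.
have JI : `]c, d[ `<=` I.
  by move=> x; rewrite /= !in_itv /= => /andP[cx xd]; apply/andP; split; lra.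
suff : ((del * (d - c))%:E <= \int[mu]_(s in I) (h s)%:E)%E.
  rewrite RintE; last exact: intg.
  rewrite lee_fin => H; apply: lt_le_trans H; apply: mulr_gt0 => //; by rewrite subr_gt0.
have H1 : (\int[mu]_(s in `]c,d[) (h s)%:E <= \int[mu]_(s in I) (h s)%:E)%E.
  apply: (ge0_subset_integral mu (measurable_itv _) (measurable_itv _) _ _ JI).
  - by apply/measurable_realfun.measurable_EFinP.
  - by move=> x Ix; rewrite lee_fin; apply: h0.
apply: (le_trans _ H1).
have -> : (del * (d-c))%:E = (\int[mu]_(s in `]c,d[) (cst del%:E) s)%E.
  by rewrite integral_cst /= ?lebesgue_measure_itv /= ?lte_fin ?cd -?EFinD //; exact: measurable_itv.
apply: (ge0_le_integral mu (measurable_itv _)).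
- by move=> x _; rewrite lee_fin ltW.
- by apply/measurable_realfun.measurable_EFinP; exact: measurable_cst.
- by apply/measurable_realfun.measurable_EFinP; apply: measurable_funS mh => //; exact: measurable_itv.
- by move=> x; rewrite /= in_itv /= => hx; rewrite lee_fin; apply: hd.
Qed.

Lemma dist_ub (f g : R -> R) s : s \in `]a, b[ ->
  ((`|f s - g s|)%:E <= Linf_dist a b f g)%E.
Proof. move=> Is; apply: ereal_sup_ubound; exists s => //. Qed.

Lemma dist_le (f g : R -> R) (r : R) : (forall s, s \in `]a, b[ -> `|f s - g s| <= r) ->
  (Linf_dist a b f g <= r%:E)%E.
Proof. move=> H; apply: ub_ereal_sup => _ [s Is <-]; rewrite lee_fin; exact: H. Qed.

Lemma mid_in : (a + b) / 2 \in `]a, b[.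
Proof. rewrite in_itv /=. have := midf_lt ab. case=> -> ->. by []. Qed.

Lemma dist_ge0 (f g : R -> R) : (0 <= Linf_dist a b f g)%E.
Proof.
have H := dist_ub f g _ mid_in.
have H2 : (0 <= (`|f ((a + b) / 2) - g ((a + b) / 2)|)%:E)%E by rewrite lee_fin.
exact: le_trans H2 H.
Qed.

Lemma dist_tri (f g h : R -> R) :
  (Linf_dist a b f h <= Linf_dist a b f g + Linf_dist a b g h)%E.
Proof.
apply: ub_ereal_sup => _ [s Is <-].
apply: le_trans (leeD (dist_ub f g _ Is) (dist_ub g h _ Is)).
rewrite -EFinD lee_fin.
have -> : f s - h s = (f s - g s) + (g s - h s) by ring.
exact: ler_normD.
Qed.

Lemma dist_fin (f g : R -> R) (r : R) : (Linf_dist a b f g < r%:E)%E ->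
  exists y : R, Linf_dist a b f g = y%:E /\ 0 <= y /\ y < r.
Proof.
move=> H; have H0 := dist_ge0 f g.
move: H H0; case: (Linf_dist a b f g) => [y| |] //= H H0.
by exists y; rewrite -!lee_fin -lte_fin.
Qed.

Lemma ae_contra (h : R -> R) (z1 z2 : R) : z1 < z2 ->
  (forall s, z1 <= s <= z2 -> h s != 0) ->
  ~ {ae lebesgue_measure, forall s, s \in `[z1, z2] -> h s = 0}.
Proof.
move=> z12 hz [N [mN N0 sub]].
have JN : (`[z1, z2]%classic : set R) `<=` N.
  move=> s Js; apply: sub => /= H.
  have := hz s; rewrite -[z1 <= s <= z2]/(s \in `[z1, z2]) => /(_ Js) /eqP; apply; exact: H.
have : (lebesgue_measure (`[z1, z2]%classic : set R) <= lebesgue_measure N)%E.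
  rewrite le_measure ?inE //; exact: measurable_itv.
rewrite N0 lebesgue_measure_itv /= lte_fin z12 -EFinD lee_fin; lra.
Qed.

Lemma ctsD (A : set R) (f g : R -> R) : {within A, continuous f} -> {within A, continuous g} ->
  {within A, continuous (fun s => f s + g s)}.
Proof. move=> hf hg x. have := continuousD (hf x) (hg x). exact. Qed.
Lemma ctsM (A : set R) (f g : R -> R) : {within A, continuous f} -> {within A, continuous g} ->
  {within A, continuous (fun s => f s * g s)}.
Proof. move=> hf hg x. have := continuousM (hf x) (hg x). exact. Qed.
Arguments ctsD {A f g}.
Arguments ctsM {A f g}.
Lemma ctsN (A : set R) (f : R -> R) : {within A, continuous f} ->
  {within A, continuous (fun s => - f s)}.
Proof. move=> hf x. have := continuousN (hf x). exact. Qed.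
Arguments ctsN {A f}.

Lemma ctsP (A : set R) (c d : R) : {within A, continuous (fun s : R => c - d * s)}.
Proof. have := ctsD (ctsC A c) (ctsN (ctsM (ctsC A d) (ctsid A))). exact. Qed.

Lemma ctsFw (f : R -> R) (c d : R) : {within I, continuous f} ->
  {within I, continuous (fun s => f s * (c - d * s) / s)}.
Proof. move=> hf. have := ctsM (ctsM hf (ctsP I c d)) (ctsinv a b a0). exact. Qed.

Lemma in_I {s} : s \in `]a, b[ -> a < s /\ s < b.
Proof. by rewrite in_itv /= => /andP. Qed.

Lemma fw_eq (f : R -> R) s : s \in `]a, b[ ->
  f s * (1 - 2 * s) / s = f s * (1 - 1 * s) / s - f s.
Proof.
move=> /in_I [hs1 hs2]; have s0 : s != 0 by rewrite gt_eqF //; exact: le_lt_trans a0 hs1.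
by field.
Qed.

Lemma Finf_props (f : R -> R) : Finf a b f ->
  [/\ mu.-integrable I (EFin \o f),
      mu.-integrable I (EFin \o (fun s => f s * (1 - 2 * s) / s)),
      \int[mu]_(s in I) f s = 1 &
      \int[mu]_(s in I) (f s * (1 - 2 * s) / s) = 0].
Proof.
move=> [hc [[M hM] [hw [h1 [h0 [M' hM']]]]]].
have if1 : mu.-integrable I (EFin \o f) by apply: intg => //; exists M.
have if2 : mu.-integrable I (EFin \o (fun s => f s * (1 - 2 * s) / s)).
  apply: intg; first exact: ctsFw.
  exists (M' + M) => s Is; rewrite fw_eq //.
  apply: le_trans (ler_normB _ _) _; apply: lerD; last exact: hM.
  rewrite mul1r; exact: hM'.
split => //.
  by apply: EFin_inj; rewrite -RintE.
by apply: EFin_inj; rewrite -RintE.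
Qed.
Lemma intZ (h : R -> R) c : mu.-integrable I (EFin \o h) ->
  mu.-integrable I (EFin \o (fun s => c * h s)).
Proof.
move=> ih.
have H : mu.-integrable I (fun x => (c%:E * (EFin \o h) x)%E).
  by apply: (integrableZl _ c ih); exact: measurable_itv.
move: H; apply: eq_integrable; first exact: measurable_itv.
by move=> s _.
Qed.

Lemma intD (h1 h2 : R -> R) : mu.-integrable I (EFin \o h1) ->
  mu.-integrable I (EFin \o h2) ->
  mu.-integrable I (EFin \o (fun s => h1 s + h2 s)).
Proof.
move=> i1 i2.
have H : mu.-integrable I ((EFin \o h1) \+ (EFin \o h2))%E.
  by apply: (integrableD _ i1 i2); exact: measurable_itv.
move: H; apply: eq_integrable; first exact: measurable_itv.
by move=> s _.
Qed.

Lemma RintL (h1 h2 : R -> R) c1 c2 : mu.-integrable I (EFin \o h1) ->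
  mu.-integrable I (EFin \o h2) ->
  \int[mu]_(s in I) (c1 * h1 s + c2 * h2 s) =
  c1 * \int[mu]_(s in I) h1 s + c2 * \int[mu]_(s in I) h2 s.
Proof.
move=> i1 i2.
rewrite RintegralD; [|exact: measurable_itv|exact: intZ|exact: intZ].
by rewrite !RintegralZl //; exact: measurable_itv.
Qed.

Lemma Finf_conv (f p : R -> R) (t : R) : 0 <= t -> t <= 1 ->
  Finf a b f -> Finf a b p -> Finf a b (fun s => (1 - t) * f s + t * p s).
Proof.
move=> t0 t1 Hf Hp.
have [if1 if2 f1 fw0] := Finf_props f Hf.
have [ip1 ip2 p1 pw0] := Finf_props p Hp.
move: Hf Hp => [hcf [[Mf hMf] [_ [_ [f0 [Nf hNf]]]]]] [hcp [[Mp hMp] [_ [_ [p0 [Np hNp]]]]]].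
have t0' : 0 <= 1 - t by rewrite subr_ge0.
split.
  have := ctsD (ctsM (ctsC I (1 - t)) hcf) (ctsM (ctsC I t) hcp). exact.
split.
  exists ((1 - t) * Mf + t * Mp) => s Is.
  apply: le_trans (ler_normD _ _) _; rewrite !normrM (ger0_norm t0) (ger0_norm t0').
  by apply: lerD; apply: ler_wpM2l => //; [exact: hMf | exact: hMp].
split.
  rewrite (@eq_integral _ _ _ mu I (fun s => ((1 - t) * (f s * (1 - 2 * s) / s) + t * (p s * (1 - 2 * s) / s))%:E)); last first.
    by move=> s _; congr (_%:E); rewrite /=; ring.
  rewrite RintE; last exact: intD (intZ _ (1 - t) if2) (intZ _ t ip2).
  by rewrite RintL // fw0 pw0 !mulr0 addr0.
split.
  rewrite (@eq_integral _ _ _ mu I (fun s => ((1 - t) * f s + t * p s)%:E)); last by [].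
  rewrite RintE; last exact: intD (intZ _ (1 - t) if1) (intZ _ t ip1).
  by rewrite RintL // f1 p1 !mulr1 subrK.
split.
  by move=> s Is; apply: addr_ge0; apply: mulr_ge0 => //; [exact: f0 | exact: p0].
exists ((1 - t) * Nf + t * Np) => s Is.
have -> : ((1 - t) * f s + t * p s) * (1 - s) / s =
  (1 - t) * (f s * (1 - s) / s) + t * (p s * (1 - s) / s) by ring.
apply: le_trans (ler_normD _ _) _; rewrite (normrM (1 - t)) (normrM t) (ger0_norm t0) (ger0_norm t0').
by apply: lerD; apply: ler_wpM2l => //; [exact: hNf | exact: hNp].
Qed.

Lemma empty_aux (e : R) (f : R -> R) : `|e| = 1 ->
  (forall s, s \in `]a, b[ -> 0 < e * (1 - 2 * s)) -> ~ Finf a b f.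
Proof.
move=> e1 he Hf.
have [if1 if2 f1 fw0] := Finf_props f Hf.
have f0 : forall s, s \in `]a, b[ -> 0 <= f s by case: Hf => _ [_ [_ [_ [h _]]]].
have H0 : (\int[mu]_(s in I) `|(EFin \o (fun s => (f s * (1 - 2 * s) / s)%R)) s|)%E = 0.
  rewrite (@eq_integral _ _ _ mu I (fun s => (e * (f s * (1 - 2 * s) / s))%:E)); last first.
    move=> s; rewrite inE /= => Is; congr (_%:E).
    have [hs1 hs2] := in_I Is.
    have s0 : 0 < s by exact: le_lt_trans a0 hs1.
    have pos : 0 <= e * (f s * (1 - 2 * s) / s).
      rewrite (_ : e * _ = f s * (e * (1 - 2 * s)) / s); last by ring.
      apply: divr_ge0; last exact: ltW.
      by apply: mulr_ge0; [exact: f0 | exact: ltW (he s Is)].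
    by rewrite -(ger0_norm pos) (normrM e) e1 mul1r.
  rewrite RintE; last exact: intZ.
  by rewrite RintegralZl ?fw0 ?mulr0 //; exact: measurable_itv.
have := (ae_eq_integral_abs mu (measurable_itv _) (measurable_int _ if2)).1 H0.
move=> Hae.
have Hae2 : ae_eq mu I (EFin \o f) (cst 0%E).
  apply: filterS Hae => s Hs Is.
  have := Hs Is; rewrite /= => -[] /eqP.
  have [hs1 hs2] := in_I Is.
  have s0 : 0 < s by exact: le_lt_trans a0 hs1.
  have w0 : 1 - 2 * s != 0.
    apply/eqP => h; have := he s Is; rewrite h mulr0 ltxx //.
  rewrite mulf_eq0 invr_eq0 (gt_eqF s0) orbF mulf_eq0 (negbTE w0) orbF => /eqP ->.
  by [].
have H : (\int[mu]_(s in I) (EFin \o f) s = \int[mu]_(s in I) (cst 0%E) s)%E.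
  apply: (ae_eq_integral _ _ _ _ _ Hae2).
  - exact: measurable_itv.
  - exact: measurable_int if1.
  - exact: measurable_cst.
rewrite integral0 RintE // f1 in H.
by move: H => /eqP; rewrite eqe oner_eq0.
Qed.

Lemma Finf_mid (f : R -> R) : Finf a b f -> a < 1 / 2 /\ 1 / 2 < b.
Proof.
move=> Hf; split.
  rewrite ltNge; apply/negP => ha; apply: (@empty_aux (-1) f) Hf.
    by rewrite normrN normr1.
  by move=> s /in_I [hs1 _]; lra.
rewrite ltNge; apply/negP => hb; apply: (@empty_aux 1 f) Hf.
  by rewrite normr1.
by move=> s /in_I [_ hs2]; lra.
Qed.

Lemma npos (z : R) : 0 <= `|z| + z.
Proof. by case: (lerP 0 z) => hz; [rewrite ger0_norm //; lra | rewrite ltr0_norm //; lra]. Qed.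

Lemma nzero (z : R) : z <= 0 -> `|z| + z = 0.
Proof. by move=> hz; rewrite ler0_norm //; lra. Qed.

Lemma ntwo (z : R) : 0 <= z -> `|z| + z = 2 * z.
Proof. by move=> hz; rewrite ger0_norm //; lra. Qed.

Lemma nbound (z : R) : -1 <= z <= 1 -> `|z| + z <= 2.
Proof. by case: (lerP 0 z) => hz /andP[h1 h2]; [rewrite ger0_norm //; lra | rewrite ltr0_norm //; lra]. Qed.

Lemma mulbound (x y X Y : R) : `|x| <= X -> `|y| <= Y -> `|x * y| <= X * Y.
Proof.
move=> hx hy; rewrite normrM; apply: ler_pM => //; exact: normr_ge0.
Qed.

Lemma exists_p : b <= 1 -> a < 1 / 2 -> 1 / 2 < b ->
  exists p, Finf a b p /\ exists k, 0 < k /\ forall s, s \in `]a, b[ -> k * s <= p s.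
Proof.
move=> b1 ah hb.
have a0' : (0:R) <= a by exact: a0.
have ab' : a < b by exact: ab.
pose x1 := (a + 1 / 2) / 2.
pose y1 := (b + 1 / 2) / 2.
have hx1 : a < x1 < 1 / 2 by rewrite /x1; apply/andP; split; lra.
have hy1 : 1 / 2 < y1 < b by rewrite /y1; apply/andP; split; lra.
move: hx1 hy1 => /andP[hx1 hx1'] /andP[hy1 hy1'].
pose u1 := fun s : R => `|x1 - 1 * s| + (x1 - 1 * s).
pose u2 := fun s : R => `|- y1 - (-1) * s| + (- y1 - (-1) * s).
have cu1 : {within I, continuous u1}.
  have := ctsD (ctsnorm I _ (ctsP I x1 1)) (ctsP I x1 1). exact.
have cu2 : {within I, continuous u2}.
  have := ctsD (ctsnorm I _ (ctsP I (- y1) (-1))) (ctsP I (- y1) (-1)). exact.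
have u1p s : 0 <= u1 s by exact: npos.
have u2p s : 0 <= u2 s by exact: npos.
have u1b s : s \in `]a, b[ -> u1 s <= 2.
  by move=> /in_I [h1 h2]; apply: nbound; apply/andP; split; lra.
have u2b s : s \in `]a, b[ -> u2 s <= 2.
  by move=> /in_I [h1 h2]; apply: nbound; apply/andP; split; lra.
have wb s : s \in `]a, b[ -> `|1 - 2 * s| <= 1.
  by move=> /in_I [h1 h2]; rewrite ler_norml; apply/andP; split; lra.
pose g0 := fun s : R => 1 - 2 * s.
pose g1 := fun s : R => u1 s * (1 - 2 * s).
pose g2 := fun s : R => u2 s * (- 1 - (- 2) * s).
have i0 : mu.-integrable I (EFin \o g0).
  apply: intg; first exact: ctsP.
  by exists 1 => s Is; apply: wb.
have i1 : mu.-integrable I (EFin \o g1).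
  apply: intg; first by have := ctsM cu1 (ctsP I 1 2); exact.
  exists (2 * 1) => s Is; apply: mulbound; last exact: wb.
  by rewrite ger0_norm //; apply: u1b.
have i2 : mu.-integrable I (EFin \o g2).
  apply: intg; first by have := ctsM cu2 (ctsP I (-1) (-2)); exact.
  exists (2 * 1) => s Is; apply: mulbound.
    by rewrite ger0_norm //; apply: u2b.
  have -> : -1 - (-2) * s = - (1 - 2 * s) by ring.
  by rewrite normrN; exact: wb.
pose K0 := \int[mu]_(s in I) g0 s.
pose K1 := \int[mu]_(s in I) g1 s.
pose K2 := \int[mu]_(s in I) g2 s.
have K1p : 0 < K1.
  apply: (@Rint_pos g1 a ((a + x1) / 2) ((x1 - a) * (1 - 2 * x1))).
  - exact: lexx.
  - lra.
  - lra.
  - apply: mulr_gt0; lra.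
  - by have := ctsM cu1 (ctsP I 1 2); exact.
  - exists (2 * 1) => s Is; apply: mulbound; last exact: wb.
    by rewrite ger0_norm //; apply: u1b.
  - move=> s /in_I [h1 h2]; rewrite /g1.
    case: (lerP s x1) => hs.
      by apply: mulr_ge0 => //; lra.
    by rewrite /u1 nzero ?mul0r //; lra.
  - move=> s /andP[h1 h2]; rewrite /g1 /u1 ntwo; last lra.
    apply: ler_pM; lra.
have K2p : 0 < K2.
  apply: (@Rint_pos g2 ((y1 + b) / 2) b ((b - y1) * (2 * y1 - 1))).
  - lra.
  - lra.
  - exact: lexx.
  - apply: mulr_gt0; lra.
  - by have := ctsM cu2 (ctsP I (-1) (-2)); exact.
  - exists (2 * 1) => s Is; apply: mulbound.
      by rewrite ger0_norm //; apply: u2b.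
    have -> : -1 - (-2) * s = - (1 - 2 * s) by ring.
  by rewrite normrN; exact: wb.
  - move=> s /in_I [h1 h2]; rewrite /g2.
    case: (lerP y1 s) => hs.
      by apply: mulr_ge0 => //; lra.
    by rewrite /u2 nzero ?mul0r //; lra.
  - move=> s /andP[h1 h2]; rewrite /g2 /u2 ntwo; last lra.
    apply: ler_pM; lra.
have [al [be [al0 [be0 Kz]]]] : exists al be : R, 0 <= al /\ 0 <= be /\ K0 + al * K1 - be * K2 = 0.
  case: (lerP 0 K0) => hK0.
    exists 0, (K0 / K2); split; first exact: lexx.
    split; first by apply: divr_ge0 => //; exact: ltW.
    by field; rewrite gt_eqF.
  exists (- K0 / K1), 0; split.
    by apply: divr_ge0; [lra | exact: ltW].
  split; first exact: lexx.
  by field; rewrite gt_eqF.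
pose u := fun s : R => 1 + al * u1 s + be * u2 s.
have cu : {within I, continuous u}.
  have := ctsD (ctsD (ctsC I 1) (ctsM (ctsC I al) cu1)) (ctsM (ctsC I be) cu2). exact.
have u1' s : 1 <= u s.
  rewrite /u; have := u1p s; have := u2p s => h1 h2.
  have : 0 <= al * u1 s by apply: mulr_ge0.
  have : 0 <= be * u2 s by apply: mulr_ge0.
  lra.
pose U := 1 + al * 2 + be * 2.
have ub s : s \in `]a, b[ -> `|u s| <= U.
  move=> Is; rewrite ger0_norm; last by have := u1' s; lra.
  rewrite /u /U; apply: lerD; first apply: lerD => //.
    by apply: ler_wpM2l => //; apply: u1b.
  by apply: ler_wpM2l => //; apply: u2b.
pose v := fun s : R => 1 * (1 * g0 s + al * g1 s) + (- be) * g2 s.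
have iv : mu.-integrable I (EFin \o v).
  have t1 := intZ _ 1 i0. have t2 := intZ _ al i1. have t3 := intD _ _ t1 t2.
  have t4 := intZ _ 1 t3. have t5 := intZ _ (- be) i2. have t6 := intD _ _ t4 t5. exact: t6.
have Kv : \int[mu]_(s in I) v s = 0.
  rewrite /v RintL //; last exact: intD (intZ _ 1 i0) (intZ _ al i1).
  rewrite RintL //.
  rewrite -/K0 -/K1 -/K2; lra.
have vE s : u s * (1 - 2 * s) = v s by rewrite /v /u /g0 /g1 /g2; ring.
pose q := fun s : R => s * u s.
have cq : {within I, continuous q}.
  have := ctsM (ctsid I) cu. exact.
have qb s : s \in `]a, b[ -> `|q s| <= 1 * U.
  move=> Is; apply: mulbound; last exact: ub.
  by have [h1 h2] := in_I Is; rewrite ger0_norm; lra.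
have iq : mu.-integrable I (EFin \o q) by apply: intg => //; exists (1 * U).
pose N := \int[mu]_(s in I) q s.
have Np : 0 < N.
  apply: (@Rint_pos q ((a + b) / 2) b ((a + b) / 2)).
  - lra.
  - lra.
  - exact: lexx.
  - lra.
  - exact: cq.
  - by exists (1 * U).
  - move=> s /in_I [h1 h2]; rewrite /q; apply: mulr_ge0; [lra | have := u1' s; lra].
  - move=> s /andP[h1 h2]; rewrite /q.
    have := u1' s => hu.
    have : s * 1 <= s * u s by apply: ler_wpM2l => //; lra.
    lra.
pose p := fun s : R => N^-1 * q s.
have N0 : N != 0 by rewrite gt_eqF.
have Ni : 0 < N^-1 by rewrite invr_gt0.
exists p; split; last first.
  exists N^-1; split => // s Is.
  rewrite /p /q; apply: ler_wpM2l; first exact: ltW.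
  have [h1 h2] := in_I Is.
  have := u1' s => hu.
  have : s * 1 <= s * u s by apply: ler_wpM2l => //; lra.
  lra.
split.
  have := ctsM (ctsC I N^-1) cq. exact.
split.
  exists (N^-1 * (1 * U)) => s Is; rewrite /p normrM ger0_norm; last exact: ltW.
  by apply: ler_wpM2l; [exact: ltW | exact: qb].
split.
  rewrite (@eq_integral _ _ _ mu I (fun s => (N^-1 * v s)%:E)); last first.
    move=> s; rewrite inE /= => Is; congr (_%:E).
    have [h1 h2] := in_I Is.
    have s0 : s != 0 by rewrite gt_eqF //; lra.
    rewrite -vE /p /q; field. by rewrite N0 s0.
  rewrite RintE; last exact: intZ.
  rewrite RintegralZl; [by rewrite Kv mulr0 | exact: (measurable_itv `]a, b[) | exact: iv].
split.
  rewrite RintE; last exact: intZ.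
  rewrite /p RintegralZl; [by rewrite -/N mulVf | exact: measurable_itv | exact: iq].
split.
  move=> s /in_I [h1 h2]; rewrite /p /q; apply: mulr_ge0; first exact: ltW.
  by apply: mulr_ge0; [lra | have := u1' s; lra].
exists (N^-1 * (U * 1)) => s Is.
have [h1 h2] := in_I Is.
have s0 : s != 0 by rewrite gt_eqF //; lra.
have -> : p s * (1 - s) / s = N^-1 * (u s * (1 - s)) by rewrite /p /q; field; rewrite ?N0 ?s0.
rewrite normrM ger0_norm; last exact: ltW.
apply: ler_wpM2l; first exact: ltW.
apply: mulbound; first exact: ub.
by rewrite ger0_norm; lra.
Qed.

Definition An (n : nat) : set (R -> R) :=
  [set h | Finf a b h /\ exists z1 z2 : R, n.+1%:R^-1 <= z1 /\ a < z1 /\ z1 < z2 /\ z2 < b /\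
     {ae lebesgue_measure, forall s, s \in `[z1, z2] -> h s = 0}].

Lemma An_nd (n : nat) : b <= 1 -> nowhere_dense_in a b (Finf a b) (An n).
Proof.
move=> b1 U [UX Uo] [f Uf].
have a0' : (0:R) <= a by exact: a0.
have ab' : a < b by exact: ab.
have Xf := UX f Uf.
have [ah hb] := Finf_mid f Xf.
have [p [Xp [k [k0 hk]]]] := exists_p b1 ah hb.
have [e [e0 He]] := Uo f Uf.
move: (Xf) => [_ [[Mf hMf] _]].
move: (Xp) => [_ [[Mp hMp] _]].
pose B := `|Mf| + `|Mp| + 1.
have B0 : 0 < B by rewrite /B; have := normr_ge0 Mf; have := normr_ge0 Mp; lra.
pose t := e / (4 * B + 4 * e).
have den0 : 0 < 4 * B + 4 * e by lra.
have t0 : 0 < t by apply: divr_gt0.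
have t1 : t <= 1 by rewrite /t ler_pdivrMr //; lra.
have tB : t * B < e / 2.
  rewrite /t mulrAC ltr_pdivrMr //.
  have : 0 < e * e by apply: mulr_gt0.
  nra.
pose g := fun s => (1 - t) * f s + t * p s.
have Xg : Finf a b g := Finf_conv f p t (ltW t0) t1 Xf Xp.
have dfg : (Linf_dist a b f g <= (t * B)%:E)%E.
  apply: dist_le => s Is.
  have -> : f s - g s = t * (f s - p s) by rewrite /g; ring.
  rewrite normrM ger0_norm; last exact: ltW.
  apply: ler_wpM2l; first exact: ltW.
  apply: le_trans (ler_normB _ _) _.
  have := hMf s Is; have := hMp s Is; have := ler_norm Mf; have := ler_norm Mp.
  rewrite /B; lra.
pose c : R := n.+1%:R^-1.
have c0 : 0 < c by rewrite /c invr_gt0.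
pose x := e / 2.
pose y := t * k * c.
have x0 : 0 < x by rewrite /x; lra.
have y0 : 0 < y by rewrite /y; apply: mulr_gt0 => //; apply: mulr_gt0.
pose r := x * y / (x + y).
have r0 : 0 < r by rewrite /r; apply: divr_gt0; [apply: mulr_gt0 | lra].
have rx : r <= x.
  rewrite /r ler_pdivrMr; last lra.
  have : 0 < x * x by apply: mulr_gt0.
  nra.
have ry : r <= y.
  rewrite /r ler_pdivrMr; last lra.
  have : 0 < y * y by apply: mulr_gt0.
  nra.
pose V := [set h | Finf a b h /\ (Linf_dist a b g h < r%:E)%E].
exists V; split; last split; last split.
- split; first by move=> h [].
  move=> h [Xh dh].
  have [z [dz [z0 zr]]] := dist_fin _ _ _ dh.
  exists (r - z); split; first by rewrite subr_gt0.
  move=> h' Xh' dh'; split => //.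
  apply: le_lt_trans (dist_tri g h h') _.
  rewrite dz.
  have [z' [dz' [z0' zr']]] := dist_fin _ _ _ dh'.
  by rewrite dz' -EFinD lte_fin; lra.
- exists g; split => //.
  apply: le_lt_trans (dist_le g g 0 _) _.
    by move=> s _; rewrite subrr normr0.
  by rewrite lte_fin.
- move=> h [Xh dh]; apply: He => //.
  apply: le_lt_trans (dist_tri f g h) _.
  have [z [dz [z0 zr]]] := dist_fin _ _ _ dh.
  rewrite dz.
  apply: le_lt_trans (leeD dfg (lexx _)) _.
  have rx' : r <= e / 2 by exact: rx.
  by rewrite -EFinD lte_fin; lra.
- apply/seteqP; split => // h [[Xh dh] [_ [z1 [z2 [cz1 [az1 [z12 [z2b hae]]]]]]]].
  apply: (ae_contra h z1 z2 z12 _ hae) => s /andP[hs1 hs2].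
  have Is : s \in `]a, b[.
    by rewrite in_itv /=; apply/andP; split; lra.
  have hgs : ((`|g s - h s|)%:E < r%:E)%E := le_lt_trans (dist_ub g h _ Is) dh.
  rewrite lte_fin in hgs.
  have hn := ler_norm (g s - h s).
  have hps := hk s Is.
  have hf0 : 0 <= f s by case: Xf => _ [_ [_ [_ [hh _]]]]; exact: hh.
  have : (1 - t) * f s >= 0 by apply: mulr_ge0 => //; lra.
  have : t * (k * s) <= t * p s by apply: ler_wpM2l => //; exact: ltW.
  have : t * k * c <= t * k * s.
    apply: ler_wpM2l; [apply: mulr_ge0; exact: ltW | exact: le_trans cz1 hs1].
  rewrite /g /y in hgs hn ry *.
  move=> H1 H2 H3.
  apply/eqP => hs0; rewrite hs0 subr0 in hgs hn.
  have h1 := le_lt_trans hn hgs.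
  have h2 : r <= (1 - t) * f s + t * p s.
    apply: le_trans ry _; apply: le_trans H1 _; rewrite -mulrA.
    by apply: le_trans H2 _; rewrite -{1}(add0r (t * p s)) lerD2r.
  by move: (lt_le_trans h1 h2); rewrite ltxx.
Qed.

End T.
End S.

Theorem proposition11 (R : realType) (a b : R) :
  0 <= a -> a < b -> b <= 1 ->
  first_category_in a b (Finf a b) (Fzero a b).
Proof.
move=> a0 ab b1.
exists (@An R a b); split.
  by move=> n; apply: An_nd.
move=> f [Xf [z1 [z2 [az1 [z12 [z2b hae]]]]]].
have z10 : 0 < z1 by exact: le_lt_trans a0 az1.
have [n hn] := arch _ _ z10.
exists n => //.
by split => //; exists z1, z2.
Qed.
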